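(* Let $A$ be a finite set and let $\rho\subseteq A^n$, $n\ge3$, be an essential key relation preserved by a semilattice operation or by a 2-semilattice operation on $A$. Then the pattern of $\rho$ is either the trivial equivalence relation, or an equivalence relation in which exactly one class has two elements and all other classes are singletons.
   Context: A semilattice operation is a binary associative, commutative, idempotent operation. A 2-semilattice operation is a binary commutative idempotent operation $s$ satisfying $s(x,s(x,y))=s(x,y)$. An operation preserves $\rho$ if applying it coordinatewise to tuples of $\rho$ gives a tuple of $\rho$. A unary vector-function is a tuple $\Psi=(\psi_1,\dots,\psi_n)$ of maps $\psi_i:A\to A$ acting coordinatewise; it preserves $\rho$ if $\Psi(\rho)\subseteq\rho$. $\rho$ is a key relation if there is $\beta\in A^n\setminus\rho$ (a key tuple) such that every $\alpha\in A^n\setminus\rho$ is mapped to $\beta$ by some unary vector-function preserving $\rho$. $\rho$ is essential if it cannot be written as a conjunction of relations of smaller arities. The pattern of $\rho$: for $i\ne j$, $i\overset{\rho}{\sim}j$ iff there do NOT exist $a_1,\dots,a_n,b_i,b_j\in A$ with $(a_1,\dots,a_n)\notin\rho$ while the tuples obtained by replacing $a_i$ by $b_i$, replacing $a_j$ by $b_j$, and replacing both, all lie in $\rho$; and $i\overset{\rho}{\sim}i$ always. *)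

(* Defs.v *)
From HB Require Import structures.
From mathcomp Require Import all_boot.
Set Implicit Arguments. Unset Strict Implicit. Unset Printing Implicit Defensive.

Notation tup A n := {ffun 'I_n -> A}.
Notation relation A n := {set tup A n}.

Definition semilattice_op (A : Type) (f : A -> A -> A) : Prop :=
  (forall x y z, f x (f y z) = f (f x y) z) /\
  (forall x y, f x y = f y x) /\ (forall x, f x x = x).

Definition two_semilattice_op (A : Type) (f : A -> A -> A) : Prop :=
  (forall x y, f x y = f y x) /\ (forall x, f x x = x) /\
  (forall x y, f x (f x y) = f x y).

Definition app2 (A : finType) n (f : A -> A -> A) (a b : tup A n) : tup A n :=
  [ffun i => f (a i) (b i)].

Definition preserves (A : finType) n (f : A -> A -> A) (rho : relation A n) : Prop :=
  forall a b, a \in rho -> b \in rho -> app2 f a b \in rho.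

Definition vapp (A : finType) n (Psi : 'I_n -> A -> A) (a : tup A n) : tup A n :=
  [ffun i => Psi i (a i)].

Definition vpreserves (A : finType) n (Psi : 'I_n -> A -> A) (rho : relation A n) : Prop :=
  forall a, a \in rho -> vapp Psi a \in rho.

Definition key_relation (A : finType) n (rho : relation A n) : Prop :=
  exists beta : tup A n, beta \notin rho /\
    forall alpha : tup A n, alpha \notin rho ->
      exists Psi : 'I_n -> A -> A, vpreserves Psi rho /\ vapp Psi alpha = beta.

(* a conjunct sigma(x_{s 0}, ..., x_{s (m-1)}) with m < n *)
Record conjunct (A : finType) (n : nat) := Conjunct {
  c_ar : nat;
  c_ar_lt : c_ar < n;
  c_vars : 'I_c_ar -> 'I_n;
  c_rel : relation A c_ar }.

Definition conj_holds (A : finType) n (c : conjunct A n) (a : tup A n) : bool :=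
  [ffun i => a (@c_vars A n c i)] \in @c_rel A n c.

Definition essential (A : finType) n (rho : relation A n) : Prop :=
  ~ exists cs : seq (conjunct A n),
      forall a : tup A n, (a \in rho) = all (fun c => conj_holds c a) cs.

Definition upd (A : finType) n (a : tup A n) (i : 'I_n) (b : A) : tup A n :=
  [ffun k => if k == i then b else a k].

Definition pattern (A : finType) n (rho : relation A n) (i j : 'I_n) : Prop :=
  i = j \/
  (i <> j /\ ~ exists (a : tup A n) (bi bj : A),
      [/\ a \notin rho, upd a i bi \in rho, upd a j bj \in rho
        & upd (upd a i bi) j bj \in rho]).

(* Main.v *)
Require Import Defs.
From HB Require Import structures.
From mathcomp Require Import all_boot.
From Stdlib Require Import Classical.
Set Implicit Arguments. Unset Strict Implicit. Unset Printing Implicit Defensive.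

Definition wit (A : finType) n (rho : relation A n) (i j : 'I_n) : Prop :=
  exists (a : tup A n) (bi bj : A),
      [/\ a \notin rho, upd a i bi \in rho, upd a j bj \in rho
        & upd (upd a i bi) j bj \in rho].

Lemma op_props (A : Type) (f : A -> A -> A) :
  semilattice_op f \/ two_semilattice_op f ->
  [/\ (forall x y, f x y = f y x), (forall x, f x x = x) &
      (forall x y, f x (f x y) = f x y)].
Proof.
case=> [[As [C I]]|[C [I Ab]]]; split => //.
by move=> x y; rewrite As I.
Qed.

Ltac pw := apply/ffunP => ?; rewrite !ffunE;
  repeat (case: eqP => [?|?]; subst); rewrite ?eqxx //=.

Lemma upd_com (A : finType) n (a : tup A n) i j x y : i != j ->
  upd (upd a i x) j y = upd (upd a j y) i x.
Proof. move=> nij; pw; by rewrite eqxx in nij. Qed.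

Lemma upd_upd (A : finType) n (a : tup A n) i x y :
  upd (upd a i x) i y = upd a i y.
Proof. pw. Qed.

Lemma upd_E (A : finType) n (a : tup A n) i x k :
  upd a i x k = if k == i then x else a k.
Proof. by rewrite ffunE. Qed.

Lemma updK (A : finType) n (a : tup A n) i : upd a i (a i) = a.
Proof. pw. Qed.

Lemma wit_sym (A : finType) n (rho : relation A n) i j : i != j ->
  wit rho i j -> wit rho j i.
Proof.
move=> nij [a [bi [bj [H1 H2 H3 H4]]]]; exists a, bj, bi; split => //.
by rewrite -upd_com.
Qed.

Lemma F_lem (A : finType) n (f : A -> A -> A) (a : tup A n) i j p q :
  (forall x, f x x = x) -> i != j ->
  app2 f (upd a i p) (upd a j q) = upd (upd a i (f p (a i))) j (f (a j) q).
Proof. move=> I nij; pw; by rewrite ?I // eqxx in nij. Qed.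

Lemma vapp_upd (A : finType) n (Psi : 'I_n -> A -> A) (a : tup A n) t x :
  vapp Psi (upd a t x) = upd (vapp Psi a) t (Psi t x).
Proof. pw. Qed.



Lemma bad_lem (A : finType) n (f : A -> A -> A) (rho : relation A n)
  (kap : tup A n) (i j k : 'I_n) x y z :
  (forall x y, f x y = f y x) -> (forall x, f x x = x) ->
  (forall x y, f x (f x y) = f x y) -> preserves f rho ->
  i != j -> j != k -> i != k ->
  upd kap j x \in rho -> upd kap i y \in rho -> upd kap k z \in rho ->
  upd kap j (f x (kap j)) \notin rho -> wit rho i k.
Proof.
move=> C I Ab P nij njk nik Hx Hy Hz Hn.
exists (upd kap j (f x (kap j))), (f (kap i) y), (f (kap k) z); split => //.
- have := P _ _ Hx Hy; rewrite F_lem //; last by rewrite eq_sym.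
- have := P _ _ Hx Hz; rewrite F_lem //.
have := P _ _ (P _ _ Hx Hy) Hz.
suff -> : app2 f (app2 f (upd kap j x) (upd kap i y)) (upd kap k z) =
  upd (upd (upd kap j (f x (kap j))) i (f (kap i) y)) k (f (kap k) z) by [].
have nji : j != i by rewrite eq_sym.
have nkj : k != j by rewrite eq_sym.
have nki : k != i by rewrite eq_sym.
apply/ffunP => t; rewrite !ffunE.
case: (eqVneq t k) => [->|ntk].
  rewrite ?eqxx ?(negbTE nkj) ?(negbTE nki) ?(negbTE nij) ?(negbTE nji) ?(negbTE njk) ?(negbTE nik).
  by rewrite I.
case: (eqVneq t i) => [->|nti].
  rewrite ?eqxx ?(negbTE nkj) ?(negbTE nki) ?(negbTE nij) ?(negbTE nji) ?(negbTE njk) ?(negbTE nik).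
  by rewrite C Ab.
case: (eqVneq t j) => [->|ntj].
  rewrite ?eqxx ?(negbTE nkj) ?(negbTE nki) ?(negbTE nij) ?(negbTE nji) ?(negbTE njk) ?(negbTE nik).
  by rewrite [f x _]C [f (f _ _) _]C Ab.
rewrite ?(negbTE ntk) ?(negbTE nti) ?(negbTE ntj).
by rewrite !I.
Qed.


Lemma ess_nt (A : finType) n (rho : relation A n) : 0 < n -> essential rho ->
  exists e : tup A n, e \notin rho /\ forall t, exists x, upd e t x \in rho.
Proof.
move=> n0 Hess; apply: NNPP => Hno; apply: Hess.
have Hlt : n.-1 < n by rewrite ltn_predL.
exists [seq @Conjunct A n n.-1 Hlt (@lift n t)
          [set [ffun k => (r : tup A n) (lift t k)] | r in rho] | t <- enum 'I_n].
move=> a; rewrite all_map; apply/idP/allP.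
  move=> Ha t _; rewrite /= /conj_holds /=.
  by apply/imsetP; exists a.
move=> H; apply/negPn/negP => Ha; apply: Hno; exists a; split => // t.
have := H _ (mem_enum _ t); rewrite /= /conj_holds /= => /imsetP [r Hr Heq].
exists (r t); suff -> : upd a t (r t) = r by [].
apply/ffunP => k; rewrite ffunE.
case: (unliftP t k) => [j ->|->]; last by rewrite eqxx.
rewrite eq_sym (negbTE (neq_lift t j)).
by have := congr1 (fun g : tup A n.-1 => g j) Heq; rewrite !ffunE.
Qed.

Lemma key_nt (A : finType) n (rho : relation A n) : 0 < n -> essential rho ->
  key_relation rho ->
  exists beta : tup A n, [/\ beta \notin rho,
    (forall alpha : tup A n, alpha \notin rho ->
      exists Psi : 'I_n -> A -> A, vpreserves Psi rho /\ vapp Psi alpha = beta) &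
    forall t, exists x, upd beta t x \in rho].
Proof.
move=> n0 He [beta [Hb Hk]]; exists beta; split => //.
have [e [He1 He2]] := ess_nt n0 He.
have [Psi [HP HPe]] := Hk e He1.
move=> t; have [x Hx] := He2 t; exists (Psi t x).
by rewrite -HPe -vapp_upd; apply: HP.
Qed.


Ltac simp_neq := repeat (rewrite eqxx /=) ||
  match goal with
  | H : is_true (?x != ?y) |- context [?x == ?y] => rewrite (negbTE H)
  | H : is_true (?x != ?y) |- context [?y == ?x] => rewrite [y == x]eq_sym (negbTE H)
  end.

Ltac tcase i j k := let t := fresh "t" in
  apply/ffunP => t; rewrite !ffunE;
  case: (eqVneq t i) => [?|?]; [subst t|case: (eqVneq t j) => [?|?];
     [subst t|case: (eqVneq t k) => [?|?]; [subst t|]]]; simp_neq.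

Lemma shared_lem (A : finType) n (f : A -> A -> A) (rho : relation A n)
  (beta : tup A n) (i j k : 'I_n) : beta \notin rho ->
  (forall x y, f x y = f y x) -> (forall x, f x x = x) ->
  (forall x y, f x (f x y) = f x y) -> preserves f rho ->
  (forall alpha : tup A n, alpha \notin rho ->
      exists Psi : 'I_n -> A -> A, vpreserves Psi rho /\ vapp Psi alpha = beta) ->
  (forall t, exists x, upd beta t x \in rho) ->
  i != j -> i != k -> j != k -> ~ wit rho i j -> ~ wit rho i k -> False.
Proof.
move=> Hb C I Ab P Hkey HM nij nik njk Nij Nik.
have nji : j != i by rewrite eq_sym.
have nki : k != i by rewrite eq_sym.
have nkj : k != j by rewrite eq_sym.
have [u Hu] := HM i; have [v Hv] := HM j; have [w Hw] := HM k.
have Hj : forall v0, upd beta j v0 \in rho -> upd beta j (f v0 (beta j)) \in rho.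
  move=> v0 Hv0; apply/negPn/negP => Hn; apply: Nik.
  exact: (bad_lem C I Ab P nij njk nik Hv0 Hu Hw Hn).
set delta := upd (upd beta i u) j v.
have Hd : delta \notin rho.
  by apply/negP => Hd; apply: Nij; exists beta, u, v; split.
have [Th [HTp HTd]] := Hkey delta Hd.
have hT : forall t, Th t (delta t) = beta t.
  move=> t. rewrite -HTd. by rewrite /vapp [RHS]ffunE.
have hTi : Th i u = beta i by have := hT i; rewrite /delta !ffunE eqxx (negbTE nij).
have hTj : Th j v = beta j by have := hT j; rewrite /delta !ffunE eqxx.
have hTo : forall t, t != i -> t != j -> Th t (beta t) = beta t.
  by move=> t ti tj; have := hT t; rewrite /delta !ffunE (negbTE ti) (negbTE tj).
have hTk := hTo k nki nkj.
set a := Th i (beta i); set b := Th j (beta j); set c := Th k w.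
have hA : upd beta i a \in rho.
  suff <- : vapp Th (upd beta j v) = upd beta i a by apply: HTp.
  tcase i j k; try done; rewrite ?hTj ?hTk //; by rewrite hTo.
have hB : upd beta j b \in rho.
  suff <- : vapp Th (upd beta i u) = upd beta j b by apply: HTp.
  tcase i j k; try done; rewrite ?hTi ?hTk //; by rewrite hTo.
have hC : upd (upd (upd beta i a) j b) k c \in rho.
  suff <- : vapp Th (upd beta k w) = upd (upd (upd beta i a) j b) k c by apply: HTp.
  tcase i j k; try done; rewrite ?hTi ?hTk //; by rewrite hTo.
set kap := upd (upd beta i a) j b.
have Hk2 : kap \notin rho.
  by apply/negP => H; apply: Nij; exists beta, a, b; split.
have hF : upd (upd beta i (f a (beta i))) j (f (beta j) b) \in rho.
  by rewrite -F_lem //; apply: P.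
have hb' : upd beta j (f (beta j) b) \in rho by rewrite C; apply: Hj.
case: (boolP (upd (upd beta i (f a (beta i))) j b \in rho)) => HY.
  case: (boolP (upd kap j (f (beta j) b) \in rho)) => HZ.
    apply: Nij; exists kap, (f a (beta i)), (f (beta j) b); split => //.
      suff -> : upd kap i (f a (beta i)) = upd (upd beta i (f a (beta i))) j b by [].
      by tcase i j k.
    suff -> : upd (upd kap i (f a (beta i))) j (f (beta j) b) =
       upd (upd beta i (f a (beta i))) j (f (beta j) b) by [].
    by tcase i j k.
  apply: Nik.
  apply: (bad_lem (kap := kap) (x := beta j) (y := beta i) (z := c) C I Ab P nij njk nik).
  - suff -> : upd kap j (beta j) = upd beta i a by [].
    by tcase i j k.
  - suff -> : upd kap i (beta i) = upd beta j b by [].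
    by tcase i j k.
  - by [].
  - by rewrite /kap [X in f _ X]ffunE eqxx.
apply: Nij; exists (upd (upd beta i (f a (beta i))) j b), (beta i), (f (beta j) b); split => //.
- suff -> : upd (upd (upd beta i (f a (beta i))) j b) i (beta i) = upd beta j b by [].
  by tcase i j k.
- suff -> : upd (upd (upd beta i (f a (beta i))) j b) j (f (beta j) b) =
     upd (upd beta i (f a (beta i))) j (f (beta j) b) by [].
  by tcase i j k.
- suff -> : upd (upd (upd (upd beta i (f a (beta i))) j b) i (beta i)) j (f (beta j) b)
     = upd beta j (f (beta j) b) by [].
  by tcase i j k.
Qed.


Lemma disj_lem (A : finType) n (f : A -> A -> A) (rho : relation A n)
  (beta : tup A n) (i j k l : 'I_n) : beta \notin rho ->
  (forall x y, f x y = f y x) -> (forall x, f x x = x) ->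
  (forall x y, f x (f x y) = f x y) -> preserves f rho ->
  (forall t, exists x, upd beta t x \in rho) ->
  i != j -> i != k -> i != l -> j != k -> j != l -> k != l ->
  ~ wit rho i j -> ~ wit rho k l -> False.
Proof.
move=> Hb C I Ab P HM nij nik nil njk njl nkl Nij Nkl.
have nki : k != i by rewrite eq_sym.
have nkj : k != j by rewrite eq_sym.
have [u Hu] := HM i; have [v Hv] := HM j; have [w Hw] := HM k; have [z Hz] := HM l.
have hF := P _ _ Hu Hv; rewrite F_lem // in hF.
case: (boolP (upd beta i (f u (beta i)) \in rho)) => H1.
  case: (boolP (upd beta j (f (beta j) v) \in rho)) => H2.
    by apply: Nij; exists beta, (f u (beta i)), (f (beta j) v); split.
  apply: Nkl; apply: (bad_lem C I Ab P nkj njl nkl Hv Hw Hz).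
  by rewrite C.
by apply: Nkl; apply: (bad_lem C I Ab P nki nil nkl Hu Hw Hz).
Qed.

Theorem mainTheorem10 (A : finType) (n : nat) (rho : {set {ffun 'I_n -> A}}) :
  3 <= n ->
  essential rho ->
  key_relation rho ->
  (exists f : A -> A -> A,
     (semilattice_op f \/ two_semilattice_op f) /\ preserves f rho) ->
  (forall i j : 'I_n, pattern rho i j <-> i = j) \/
  (exists i j : 'I_n, i <> j /\
     forall k l : 'I_n,
       pattern rho k l <->
       (k = l \/ (k = i /\ l = j) \/ (k = j /\ l = i))).
Proof.
move=> n3 He Hk [f [Hf P]].
have [C I Ab] := op_props Hf.
have n0 : 0 < n by apply: leq_trans n3.
have [beta [Hb Hkey HM]] := key_nt n0 He Hk.
have Sh := @shared_lem A n f rho beta.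
have Dj := @disj_lem A n f rho beta.
have nws : forall i j : 'I_n, i != j -> ~ wit rho i j -> ~ wit rho j i.
  by move=> i j nij N W; apply: N; apply: wit_sym => //; rewrite eq_sym.
case: (classic (exists i j : 'I_n, i <> j /\ ~ wit rho i j)) => Hex; last first.
  left => i j; split; last by move=> ->; left.
  case => [//|[nij N]]; exfalso; apply: Hex; by exists i, j.
right; have [i [j [nij N]]] := Hex; exists i, j; split => // k l; split; last first.
  case=> [->|[[-> ->]|[-> ->]]]; [by left|by right|].
  right; split; first by move=> E; apply: nij.
  by apply: nws => //; apply/eqP.
case=> [->|[nkl Nkl]]; first by left.
right; apply: NNPP => Hn.
have nij' : i != j by apply/eqP.
have nkl' : k != l by apply/eqP.
have nji : j != i by rewrite eq_sym.
have nlk : l != k by rewrite eq_sym.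
case: (eqVneq k i) => [eki|nki].
  subst k; have nlj : l != j by apply/eqP => E; apply: Hn; left.
  apply: (Sh i j l); try done; try (by rewrite eq_sym); by apply: nws.
case: (eqVneq k j) => [ekj|nkj].
  subst k; have nli : l != i by apply/eqP => E; apply: Hn; right.
  apply: (Sh j i l); try done; try (by rewrite eq_sym); by apply: nws.
case: (eqVneq l i) => [eli|nli].
  subst l; apply: (Sh i j k); try done; try (by rewrite eq_sym); by apply: nws.
case: (eqVneq l j) => [elj|nlj].
  subst l; apply: (Sh j i k); try done; try (by rewrite eq_sym); by apply: nws.
apply: (Dj i j k l); try done; by rewrite eq_sym.
Qed.
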